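(* Every split graph that is CIS is $\cap$-edge simplicial.
   Context: A graph is split if its vertex set can be partitioned into a clique and a stable set. A graph is CIS if every maximal clique and every maximal stable set intersect. A clique $C$ is simplicial if $C=N[v]$ for some vertex $v$; a graph is edge simplicial if every edge lies in a simplicial clique; it is $\cap$-edge simplicial if both it and its complement are edge simplicial. *)

(* Defs.v *)
From mathcomp Require Import all_boot.
Set Implicit Arguments. Unset Strict Implicit. Unset Printing Implicit Defensive.

Definition simple_graph (T : finType) (e : rel T) : Prop :=
  symmetric e /\ irreflexive e.

Definition compl_rel (T : finType) (e : rel T) : rel T :=
  fun x y => (x != y) && ~~ e x y.

Definition is_clique (T : finType) (e : rel T) (C : {set T}) : bool :=
  [forall x in C, forall y in C, (x != y) ==> e x y].

Definition is_stable (T : finType) (e : rel T) (S : {set T}) : bool :=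
  [forall x in S, forall y in S, ~~ e x y].

Definition is_max_clique (T : finType) (e : rel T) (C : {set T}) : bool :=
  maxset (is_clique e) C.

Definition is_max_stable (T : finType) (e : rel T) (S : {set T}) : bool :=
  maxset (is_stable e) S.

Definition split_graph (T : finType) (e : rel T) : Prop :=
  exists K S : {set T},
    [/\ is_clique e K, is_stable e S, K :&: S = set0 & K :|: S = [set: T]].

Definition CIS (T : finType) (e : rel T) : Prop :=
  forall C S : {set T}, is_max_clique e C -> is_max_stable e S ->
    C :&: S != set0.

Definition closed_nbhd (T : finType) (e : rel T) (v : T) : {set T} :=
  v |: [set u | e v u].

Definition simplicial_clique (T : finType) (e : rel T) (C : {set T}) : Prop :=
  is_clique e C /\ exists v : T, C = closed_nbhd e v.

Definition edge_simplicial (T : finType) (e : rel T) : Prop :=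
  forall x y : T, e x y ->
    exists C : {set T}, simplicial_clique e C /\ x \in C /\ y \in C.

Definition cap_edge_simplicial (T : finType) (e : rel T) : Prop :=
  edge_simplicial e /\ edge_simplicial (compl_rel e).

(* Main.v *)
Require Import Defs.
From mathcomp Require Import all_boot.
Set Implicit Arguments. Unset Strict Implicit.

Section S.
Variables (T : finType) (e : rel T).
Hypothesis esym : symmetric e.
Hypothesis eirr : irreflexive e.

Lemma cliqueE (C : {set T}) x y : is_clique e C -> x \in C -> y \in C -> x != y -> e x y.
Proof. by move=> /forallP/(_ x)/implyP/(_ _)/forallP/(_ y)/implyP H Hx Hy; move: (H Hx Hy)=> /implyP; apply. Qed.

Lemma cliqueI (C : {set T}) : (forall x y, x \in C -> y \in C -> x != y -> e x y) -> is_clique e C.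
Proof.
move=> H; apply/forallP=> x; apply/implyP=> Hx; apply/forallP=> y; apply/implyP=> Hy.
by apply/implyP; apply: H.
Qed.

Lemma stableE (C : {set T}) x y : is_stable e C -> x \in C -> y \in C -> ~~ e x y.
Proof. by move=> /forallP/(_ x)/implyP/(_ _)/forallP/(_ y)/implyP H Hx Hy; exact: (H Hx Hy). Qed.

Lemma stableI (C : {set T}) : (forall x y, x \in C -> y \in C -> ~~ e x y) -> is_stable e C.
Proof.
move=> H; apply/forallP=> x; apply/implyP=> Hx; apply/forallP=> y; apply/implyP=> Hy.
exact: H.
Qed.

Variables K S : {set T}.
Hypothesis HK : is_clique e K.
Hypothesis HS : is_stable e S.
Hypothesis HKS : K :&: S = set0.
Hypothesis HKS' : K :|: S = [set: T].

Lemma KorS x : (x \in K) || (x \in S).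
Proof. by rewrite -in_setU HKS' in_setT. Qed.

Lemma nbhd_clique v : (forall u, e v u -> u \in K) -> is_clique e (closed_nbhd e v).
Proof.
move=> H; apply: cliqueI => x y; rewrite !inE => /orP[/eqP->|Hx] /orP[/eqP->|Hy] Hxy.
- by rewrite eqxx in Hxy.
- exact: Hy.
- by rewrite esym.
- exact: (cliqueE HK (H _ Hx) (H _ Hy) Hxy).
Qed.

Lemma notS_K u : u \notin S -> u \in K.
Proof. by move: (KorS u); case: (u \in S); rewrite ?orbF. Qed.

Hypothesis hcis : CIS e.

Lemma key : exists v, is_clique e (closed_nbhd e v) /\ K \subset closed_nbhd e v.
Proof.
case: (boolP [exists B : {set T}, [&& is_stable e B, S \subset B & B != S]]).
  case/existsP=> B /and3P[sB SB nBS].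
  have : ~~ (B \subset S) by apply: contra nBS => BS; rewrite eqEsubset BS SB.
  case/subsetPn=> k kB kS.
  have kK := notS_K kS.
  have nk : forall u, e k u -> u \in K.
    move=> u eku; apply: notS_K; apply/negP=> uS.
    by move: (stableE sB kB (subsetP SB _ uS)); rewrite eku.
  exists k; split; first exact: nbhd_clique.
  apply/subsetP=> u uK; rewrite !inE; case: (eqVneq u k) => [->|ne]; first by rewrite ?eqxx.
  by rewrite ?ne /= (cliqueE HK kK uK) ?orbT // eq_sym.
move=> nex.
have mS : is_max_stable e S.
  apply/maxsetP; split=> // B sB SB; apply/eqP; apply: contraNT nex => nBS.
  by apply/existsP; exists B; rewrite sB SB nBS.
case: (boolP [exists B : {set T}, [&& is_clique e B, K \subset B & B != K]]); last first.
  move=> nex2.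
  have mK : is_max_clique e K.
    apply/maxsetP; split=> // B sB SB; apply/eqP; apply: contraNT nex2 => nBS.
    by apply/existsP; exists B; rewrite sB SB nBS.
  by move: (hcis mK mS); rewrite HKS eqxx.
case/existsP=> B /and3P[cB KB nBK].
have : ~~ (B \subset K) by apply: contra nBK => BK; rewrite eqEsubset BK KB.
case/subsetPn=> s sB sK.
have sS : s \in S by move: (KorS s); rewrite (negbTE sK).
have ns : forall u, e s u -> u \in K.
  move=> u esu; apply: notS_K; apply/negP=> uS.
  by move: (stableE HS sS uS); rewrite esu.
exists s; split; first exact: nbhd_clique.
apply/subsetP=> u uK; rewrite !inE; apply/orP; right.
apply: (cliqueE cB sB (subsetP KB _ uK)).
by apply: contraNneq sK => ->.
Qed.

Lemma es : edge_simplicial e.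
Proof.
move=> x y exy.
have Sn : forall w, w \in S -> forall u, e w u -> u \in K.
  move=> w wS u ewu; apply: notS_K; apply/negP=> uS.
  by move: (stableE HS wS uS); rewrite ewu.
case: (boolP (x \in S)) => xS.
  exists (closed_nbhd e x); split; first by split; [apply: nbhd_clique; exact: Sn | by exists x].
  by rewrite !inE eqxx exy orbT.
case: (boolP (y \in S)) => yS.
  exists (closed_nbhd e y); split; first by split; [apply: nbhd_clique; exact: Sn | by exists y].
  by rewrite !inE eqxx esym exy orbT.
have [v [cv Kv]] := key.
exists (closed_nbhd e v); split; first by split=> //; exists v.
by rewrite !(subsetP Kv) // notS_K.
Qed.

End S.

Lemma es_gen (T : finType) (e : rel T) :
  simple_graph e -> split_graph e -> CIS e -> edge_simplicial e.
Proof.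
by move=> [sy ir] [K [S [cK sS KS KS']]] cis; apply: (es sy cK sS KS KS' cis).
Qed.

Theorem proposition26 (T : finType) (e : rel T) :
  simple_graph e -> split_graph e -> CIS e -> cap_edge_simplicial e.
Proof.
move=> [sy ir] sp cis; split; first exact: es_gen.
have cs : forall C : {set T}, is_clique (compl_rel e) C = is_stable e C.
  move=> C; apply/idP/idP=> H.
    apply: stableI => x y Hx Hy; case: (eqVneq x y) => [->|ne]; first by rewrite ir.
    by have /andP[] := cliqueE H Hx Hy ne.
  by apply: cliqueI => x y Hx Hy ne; rewrite /compl_rel ne (stableE H Hx Hy).
have sc : forall C : {set T}, is_stable (compl_rel e) C = is_clique e C.
  move=> C; apply/idP/idP=> H.
    apply: cliqueI => x y Hx Hy ne; move: (stableE H Hx Hy).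
    by rewrite /compl_rel ne /= negbK.
  apply: stableI => x y Hx Hy; rewrite /compl_rel; case: (eqVneq x y) => [->|ne] /=; first by rewrite ?eqxx.
  by rewrite ?ne /= (cliqueE H Hx Hy ne).
apply: es_gen.
- split; first by move=> x y; rewrite /compl_rel eq_sym sy.
  by move=> x; rewrite /compl_rel eqxx.
- case: sp => K [S [cK sS KS KS']]; exists S, K.
  by rewrite cs sc setIC setUC.
- move=> C S mC mS.
  have mC' : is_max_stable e C by rewrite /is_max_stable -(maxset_eq _ cs).
  have mS' : is_max_clique e S by rewrite /is_max_clique -(maxset_eq _ sc).
  by rewrite setIC; apply: cis.
Qed.
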